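(* Let $N\ge 3$ and consider the complete graph $K_N$ as a PIR system with file length $L=2^{N-1}$, and the following scheme. Suppose the desired file is $W_{i,i'}$. Let $\Omega=\{P\subseteq[N]: |P\cap\{i,i'\}|=1\}$ (so $|\Omega|=L$), and let the user choose a bijection $\pi:\Omega\to[L]$ uniformly at random. For each server $j$ the user builds a bijection $\sigma_j$ from the family of all subsets of $N(j)=[N]\setminus\{j\}$ onto $[L]$ as follows: if $j\notin\{i,i'\}$, set $\sigma_j(P\setminus\{j\})=\pi(P)$ for every $P\in\Omega$ with $j\in P$; if $a\in\{i,i'\}$ and $\bar a$ denotes the other element of $\{i,i'\}$, set $\sigma_a(\{\bar a\}\cup(P\setminus\{a\}))=\pi(P)$ for every $P\in\Omega$ with $a\in P$; in both cases, the remaining values are assigned so that $\sigma_j$ becomes a bijection, uniformly at random among such completions. The query to server $j$ is $\sigma_j$. Server $j$ answers with the $L-1$ bits \[ b^j_P=\bigoplus_{v\in P}(W_{j,v})_{\sigma_j(P)},\qquad \emptyset\ne P\subseteq N(j), \] where $(W)_l$ is the $l$-th bit of $W$. Then this scheme is a PIR scheme (reliable and private) with rate $\frac{2^{N-1}}{2^{N-1}-1}\cdot\frac{1}{N}$.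
   Context: Graph-based PIR model on the complete graph $K_N$: servers $1,\dots,N$; for each pair of distinct servers $j,v$ there is exactly one file $W_{j,v}=W_{v,j}$, stored on servers $j$ and $v$; files are independent, each uniform on $\mathbb{F}_2^L$. A user wants one file, whose index $\theta$ is uniform and independent of the files; it sends a query to each server, and each server answers with a deterministic function of its query and the files it stores. Reliability: the desired file is determined by all answers and queries. Privacy: for each server $j$, $H(\theta\mid Q_j,W_{S_j})=H(\theta)$, where $Q_j$ is the query to server $j$ and $W_{S_j}$ the files it stores. The rate is $L$ divided by the total number of answer bits (here, the sum of the entropies $H(A_j)$). *)

(* Defs.v *)
From HB Require Import structures.
From mathcomp Require Import all_boot all_order all_algebra.
From mathcomp Require Import reals exp.
Set Implicit Arguments. Unset Strict Implicit. Unset Printing Implicit Defensive.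
Import Order.TTheory GRing.Theory Num.Theory.
Local Open Scope ring_scope.

Definition Lf (N : nat) : nat := (2 ^ (N - 1))%N.

(* File indices: edges of K_N = 2-element subsets {j,v} of the servers 'I_N. *)
Definition Pair (N : nat) := {e : {set 'I_N} | #|e| == 2%N}.

Definition Bits (N : nat) := {ffun 'I_(Lf N) -> bool}.
Definition Files (N : nat) := {ffun Pair N -> Bits N}.

(* A partial labelling of subsets of [N] by [L]; [None] = outside the domain.
   Used both for pi (domain Omega) and for sigma_j (domain = subsets of N(j)). *)
Definition Lab (N : nat) := {ffun {set 'I_N} -> option 'I_(Lf N)}.

(* The randomness of the whole experiment:
   (desired index theta, files W, bijection pi, family of queries sigma_j). *)
Definition Outcome (N : nat) :=
  (Pair N * Files N * Lab N * {ffun 'I_N -> Lab N})%type.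

Definition theta N (w : Outcome N) : Pair N := w.1.1.1.
Definition files N (w : Outcome N) : Files N := w.1.1.2.
Definition piOf N (w : Outcome N) : Lab N := w.1.2.
Definition sigmaOf N (w : Outcome N) : {ffun 'I_N -> Lab N} := w.2.

Definition Omega N (th : Pair N) : {set {set 'I_N}} :=
  [set P : {set 'I_N} | #|P :&: val th| == 1%N].

Definition bij_on N (D : pred {set 'I_N}) (p : Lab N) : bool :=
  [&& [forall P, (p P == None) == ~~ D P],
      [forall l : 'I_(Lf N), [exists P, p P == Some l]] &
      [forall P, forall P', (p P != None) ==> (p P == p P') ==> (P == P')]].

Definition pi_ok N (th : Pair N) (p : Lab N) : bool :=
  bij_on (fun P => P \in Omega th) p.

(* The set sigma_j is forced to take the value pi(P) on:
   P \ {j}                 if j \notin {i,i'},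
   {abar} cup (P \ {a})    if j = a \in {i,i'}  (abar the other element),
   i.e. (P \ {a}) cup ({i,i'} \ {a}). *)
Definition forced_set N (th : Pair N) (j : 'I_N) (P : {set 'I_N}) : {set 'I_N} :=
  if j \in val th then (P :\ j) :|: (val th :\ j) else P :\ j.

Definition sigma_ok N (th : Pair N) (p : Lab N) (j : 'I_N) (s : Lab N) : bool :=
  bij_on (fun S => j \notin S) s &&
  [forall P, ((P \in Omega th) && (j \in P)) ==> (s (forced_set th j P) == p P)].

(* The joint probability mass function of the experiment:
   theta uniform, files uniform and independent of theta, pi uniform among
   bijections Omega -> [L], and, given theta and pi, each sigma_j uniform
   (independently) among the bijections completing the forced values. *)
Definition mu (R : realType) N (w : Outcome N) : R :=
  let: (th, W, p, s) := w in
  (#|{: Pair N}|%:R)^-1 * (#|{: Files N}|%:R)^-1 *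
  ((pi_ok th p)%:R / #|[pred q | pi_ok th q]|%:R) *
  \prod_(j < N) ((sigma_ok th p j (s j))%:R / #|[pred t | sigma_ok th p j t]|%:R).

(* Bit l of the file W_{j,v} (W_{j,v} = W_{v,j}); only used with j <> v. *)
Definition Wbit N (W : Files N) (j v : 'I_N) (l : 'I_(Lf N)) : bool :=
  if (insub [set j; v] : option (Pair N)) is Some e then W e l else false.

Definition query N (w : Outcome N) (j : 'I_N) : Lab N := sigmaOf w j.

Definition stored N (w : Outcome N) (j : 'I_N) : {ffun Pair N -> option (Bits N)} :=
  [ffun e : Pair N => if j \in val e then Some (files w e) else None].

Definition answer N (w : Outcome N) (j : 'I_N) : {ffun {set 'I_N} -> bool} :=
  [ffun P : {set 'I_N} =>
     if sigmaOf w j P is Some l then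
       (P != set0) && \big[addb/false]_(v in P) Wbit (files w) j v l
     else false].

Definition log2 (R : realType) (x : R) : R := ln x / ln 2.

Definition pr (R : realType) N (T : finType) (X : Outcome N -> T) (x : T) : R :=
  \sum_(w : Outcome N | X w == x) mu R w.

Definition entropy (R : realType) N (T : finType) (X : Outcome N -> T) : R :=
  - \sum_(x : T) pr R X x * log2 (pr R X x).

Definition centropy (R : realType) N (T U : finType)
    (X : Outcome N -> T) (Y : Outcome N -> U) : R :=
  entropy R (fun w => (X w, Y w)) - entropy R Y.

Definition reliable (R : realType) N : Prop :=
  exists D : Pair N -> {ffun 'I_N -> Lab N} -> {ffun 'I_N -> {ffun {set 'I_N} -> bool}} -> Bits N,
    forall w : Outcome N, 0 < mu R w ->
      D (theta w) [ffun j => query w j] [ffun j => answer w j] = files w (theta w).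

Definition private (R : realType) N : Prop :=
  forall j : 'I_N,
    centropy R (@theta N) (fun w => (query w j, stored w j)) = entropy R (@theta N).

Definition rate (R : realType) N : R :=
  (Lf N)%:R / \sum_(j < N) entropy R (fun w => answer w j).

(* Main.v *)
Require Import Defs.
From HB Require Import structures.
From mathcomp Require Import all_boot all_order all_algebra.
From mathcomp Require Import reals exp.
From mathcomp Require Import zify ring.
Import Order.TTheory GRing.Theory Num.Theory.
Set Implicit Arguments. Unset Strict Implicit. Unset Printing Implicit Defensive.
Lemma bij_onP N (D : pred {set 'I_N}) (p : Lab N) :
  reflect [/\ forall P, (p P == None) = ~~ D P,
              forall l, exists P, p P = Some l
            & forall P P', p P != None -> p P = p P' -> P = P'] (bij_on D p).
Proof.
apply: (iffP and3P) => [[/forallP h1 /forallP h2 /forallP h3]|[h1 h2 h3]]; split.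
- by move=> P; exact: (eqP (h1 P)).
- by move=> l; case/existsP: (h2 l) => P /eqP; exists P.
- move=> P P' nz e; move/forallP: (h3 P) => /(_ P') /implyP /(_ nz) /implyP.
  by rewrite e eqxx => /(_ isT) /eqP.
- by apply/forallP => P; rewrite h1.
- by apply/forallP => l; case: (h2 l) => P e; apply/existsP; exists P; rewrite e.
- apply/forallP => P; apply/forallP => P'; apply/implyP => nz; apply/implyP => /eqP e.
  by rewrite (h3 _ _ nz e).
Qed.

Definition relab N (r : 'I_(Lf N) -> 'I_(Lf N)) (p : Lab N) : Lab N :=
  [ffun P => omap r (p P)].

Lemma omap_eq (T : eqType) (r : T -> T) (a b : option T) : injective r ->
  (omap r a == omap r b) = (a == b).
Proof. by move=> ir; case: a b => [a|] [b|] //=; rewrite !eqE /= (inj_eq ir). Qed.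

Lemma relab_inj N r : injective r -> injective (@relab N r).
Proof.
move=> ir p q e; apply/ffunP => P; move/ffunP: e => /(_ P); rewrite !ffunE.
by case: (p P) (q P) => [a|] [b|] //= [/ir ->].
Qed.

Lemma bij_on_relab N (D : pred {set 'I_N}) r p : injective r ->
  bij_on D (relab r p) = bij_on D p.
Proof.
move=> ir; have [g rg gr] := injF_bij ir.
apply/bij_onP/bij_onP => [[h1 h2 h3]|[h1 h2 h3]]; split.
- by move=> P; rewrite -h1 ffunE; case: (p P).
- move=> l; case: (h2 (r l)) => P; rewrite ffunE; case e: (p P) => [a|] //= [/ir ea].
  by exists P; rewrite e ea.
- move=> P P' nz e; apply: h3; first by rewrite ffunE; case: (p P) nz.
  by rewrite !ffunE e.
- by move=> P; rewrite -h1 ffunE; case: (p P).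
- by move=> l; case: (h2 (g l)) => P e; exists P; rewrite ffunE e /= gr.
- move=> P P'; rewrite !ffunE => nz e; apply: h3; first by case: (p P) nz.
  by move: e nz; case: (p P) (p P') => [a|] [b|] //= [/ir ->].
Qed.

Lemma sigma_ok_relab N th p j s r : injective r ->
  @sigma_ok N th (relab r p) j (relab r s) = sigma_ok th p j s.
Proof.
move=> ir; rewrite /sigma_ok bij_on_relab //; congr andb.
by apply: eq_forallb => P; rewrite !ffunE omap_eq.
Qed.

Lemma pi_ok_relab N th p r : injective r -> @pi_ok N th (relab r p) = pi_ok th p.
Proof. by move=> ir; rewrite /pi_ok bij_on_relab. Qed.

Lemma relab_exists N (D : pred {set 'I_N}) p p' :
  bij_on D p -> bij_on D p' -> exists r, injective r /\ relab r p = p'.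
Proof.
move=> /bij_onP [h1 h2 h3] /bij_onP [h1' h2' h3'].
pose r l := if [pick P | p P == Some l] is Some P then odflt l (p' P) else l.
have rs l : exists P, p P = Some l /\ p' P = Some (r l).
  rewrite /r; case: pickP => [P /eqP e|]; last by case: (h2 l) => P e /(_ P); rewrite e eqxx.
  exists P; split => //; case e': (p' P) => [a|] //.
  by move/eqP: e'; rewrite h1' -h1 e.
exists r; split.
  move=> l1 l2 e; have [P1 [e1 f1]] := rs l1; have [P2 [e2 f2]] := rs l2.
  have : P1 = P2 by apply: h3'; rewrite ?f1 ?f2 ?e.
  by move=> E; move: e1 e2; rewrite E => -> [].
apply/ffunP => P; rewrite ffunE; case e: (p P) => [l|] /=.
  have [P0 [e0 f0]] := rs l; have E : P0 = P by apply: h3; rewrite ?e0 ?e.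
  by rewrite -E f0.
by move/eqP: e; rewrite h1 -h1' => /eqP.
Qed.
Lemma extend_bij N (D : {set {set 'I_N}}) (h : {set 'I_N} -> option 'I_(Lf N)) :
  (0 < Lf N)%N -> #|D| = Lf N ->
  (forall x, h x != None -> x \in D) ->
  (forall x y, h x != None -> h x = h y -> x = y) ->
  exists s : Lab N, bij_on (fun S => S \in D) s /\ forall x, h x != None -> s x = h x.
Proof.
move=> L0 cD hD hI.
pose x0 : 'I_(Lf N) := Ordinal L0.
pose dom := [set x | h x != None].
pose img := [set l : 'I_(Lf N) | [exists x, h x == Some l]].
pose B := D :\: dom. pose C := ~: img.
have cimg : #|img| = #|dom|.
  have -> : img = (fun x => odflt x0 (h x)) @: dom.
    apply/setP => l; rewrite inE; apply/existsP/imsetP => [[x /eqP e]|[x]].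
      by exists x; rewrite ?inE e.
    by rewrite inE; case e: (h x) => [a|] //= _ ->; exists x; rewrite e.
  apply: card_in_imset => x y; rewrite !inE => hx hy e; apply: hI => //.
  by move: e hx hy; case: (h x) (h y) => [a|] [b|] //= ->.
have domD : dom \subset D by apply/subsetP => x; rewrite inE; exact: hD.
have cB : #|B| = #|C|.
  have h1 := cardsC img; rewrite card_ord -/C cimg in h1.
  have h2 := cardsD D dom; rewrite (setIidPr domD) -/B in h2.
  by rewrite h2 cD -{1}h1 addKn.
pose hB x := nth x0 (enum C) (index x (enum B)).
have hBC x : x \in B -> hB x \in C.
  move=> xB; rewrite -mem_enum; apply: mem_nth; rewrite -cardE -cB cardE index_mem.
  by rewrite mem_enum.
have hBinj x y : x \in B -> y \in B -> hB x = hB y -> x = y.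
  move=> xB yB e.
  have ix : (index x (enum B) < size (enum C))%N by rewrite -cardE -cB cardE index_mem mem_enum.
  have iy : (index y (enum B) < size (enum C))%N by rewrite -cardE -cB cardE index_mem mem_enum.
  move/eqP: e; rewrite /hB nth_uniq ?enum_uniq // => /eqP e.
  by rewrite -(nth_index set0 (_ : x \in enum B)) ?mem_enum // e nth_index ?mem_enum.
have hBsurj l : l \in C -> exists2 x, x \in B & hB x = l.
  move=> lC.
  have il : (index l (enum C) < size (enum B))%N by rewrite -cardE cB cardE index_mem mem_enum.
  exists (nth set0 (enum B) (index l (enum C))); first by rewrite -mem_enum mem_nth.
  by rewrite /hB index_uniq ?enum_uniq // nth_index // mem_enum.
exists [ffun x => if h x is Some l then Some l else if x \in D then Some (hB x) else None].
split; last by move=> x; rewrite ffunE; case: (h x).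
apply/bij_onP; split.
- move=> P; rewrite ffunE; case e: (h P) => [a|] /=.
    by rewrite hD // e.
  by case: (P \in D).
- move=> l; case: (boolP (l \in img)) => [|lC].
    by rewrite inE => /existsP [x /eqP e]; exists x; rewrite ffunE e.
  have lC' : l \in C by rewrite inE.
  have [x xB e] := hBsurj l lC'; exists x; rewrite ffunE.
  move: xB; rewrite !inE => /andP [] /negPn /eqP -> ->; by rewrite e.
- have inB x : h x = None -> x \in D -> x \in B by move=> e xD; rewrite !inE e xD.
  move=> P P'; rewrite !ffunE.
  case e: (h P) => [a|]; case e': (h P') => [b|] /=.
  + by move=> _ E; apply: hI; rewrite ?e ?e' ?E.
  + case: ifP => // xD _ [E]; have := hBC _ (inB _ e' xD).
    rewrite !inE -E => /negP []; apply/existsP; exists P; by rewrite e.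
  + case: ifP => // xD _ [E]; have := hBC _ (inB _ e xD).
    rewrite !inE E => /negP []; apply/existsP; exists P'; by rewrite e'.
  + case: ifP => // xD _; case: ifP => // xD' [E].
    by apply: hBinj => //; apply: inB.
Qed.
Lemma pairP N (t : Pair N) : exists i i', i != i' /\ val t = [set i; i'].
Proof. by apply/cards2P; exact: (valP t). Qed.

Lemma card_I2 N (P : {set 'I_N}) i i' : i != i' ->
  #|P :&: [set i; i']| = ((i \in P) + (i' \in P))%N.
Proof.
move=> ii'.
have E : P :&: [set i; i'] =
   (if i \in P then [set i] else set0) :|: (if i' \in P then [set i'] else set0).
  apply/setP => x; rewrite !inE.
  have i'i : i' != i by rewrite eq_sym.
  case: (eqVneq x i) => [->|xi].
    by case: (i \in P); case: (i' \in P); rewrite ?inE ?eqxx ?(negbTE ii').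
  case: (eqVneq x i') => [->|xi'].
    by case: (i \in P); case: (i' \in P); rewrite ?inE ?eqxx ?(negbTE i'i) ?orbT ?andbT.
  by case: (i \in P); case: (i' \in P); rewrite ?inE ?(negbTE xi) ?(negbTE xi') ?andbF.
rewrite E; case: (i \in P); case: (i' \in P) => /=.
- by rewrite -/(setU _ _) cards2 ii'.
- by rewrite setU0 cards1.
- by rewrite set0U cards1.
- by rewrite setU0 cards0.
Qed.

Lemma inOmega N (t : Pair N) i i' P : i != i' -> val t = [set i; i'] ->
  (P \in Omega t) = ((i \in P) != (i' \in P)).
Proof.
move=> ii' ti; rewrite inE ti card_I2 //.
by case: (i \in P); case: (i' \in P).
Qed.
Lemma card_notin N (j : 'I_N) : #|[set S : {set 'I_N} | j \notin S]| = (2 ^ (N - 1))%N.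
Proof.
have -> : [set S : {set 'I_N} | j \notin S] = powerset [set~ j].
  apply/setP => S; rewrite powersetE inE; apply/idP/subsetP => [jS x xS|sub].
    by rewrite !inE; apply: contraNneq jS => <-.
  by apply/negP => /sub; rewrite !inE eqxx.
by rewrite card_powerset cardsC1 card_ord subn1.
Qed.

Lemma setD1_id N (S : {set 'I_N}) a : a \notin S -> S :\ a = S.
Proof.
move=> aS; apply/setP => x; rewrite in_setD1; case: (eqVneq x a) => [->|] //=.
by rewrite (negbTE aS).
Qed.

Lemma card_Omega N (t : Pair N) : #|Omega t| = Lf N.
Proof.
have [i [i' [ii' ti]]] := pairP t.
have hO P : (P \in Omega t) = ((i \in P) != (i' \in P)) by apply: inOmega.
have i'i : i' != i by rewrite eq_sym.
have inj : {in Omega t &, injective (fun P => P :\ i')}.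
  move=> P P'; rewrite !hO => hP hP' e; apply/setP => x.
  case: (eqVneq x i') => [->|xi'].
    have E : (i \in P) = (i \in P').
      by have := congr1 (fun A : {set 'I_N} => i \in A) e; rewrite /= !in_setD1 ii'.
    move: hP hP'; rewrite E; case: (i \in P'); case: (i' \in P); case: (i' \in P') => //.
  have := congr1 (fun A : {set 'I_N} => x \in A) e; rewrite /= !in_setD1 xi' /=.
  by [].
rewrite /Lf -(card_notin i') -(card_in_imset inj).
apply: eq_card => S; rewrite inE; apply/imsetP/idP => [[P _ ->]|iS].
  by rewrite setD11.
case: (boolP (i \in S)) => Hi.
  by exists S; rewrite ?hO ?Hi ?(negbTE iS) ?setD1_id.
exists (i' |: S); last by rewrite setU1K.
by rewrite hO !inE eqxx (negbTE ii') (negbTE Hi).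
Qed.
Lemma Lf_gt0 N : (0 < Lf N)%N.
Proof. by rewrite /Lf expn_gt0. Qed.

Lemma bij_on_ext N (D1 D2 : pred {set 'I_N}) p : D1 =1 D2 -> bij_on D1 p = bij_on D2 p.
Proof. by move=> E; rewrite /bij_on; congr (_ && _); apply: eq_forallb => P; rewrite E. Qed.

Lemma pi_exists N (t : Pair N) : exists p, pi_ok t p.
Proof.
have [s [hs _]] := @extend_bij N (Omega t) (fun _ => None) (Lf_gt0 N) (card_Omega t)
  (fun _ h => False_ind _ (negP h erefl)) (fun _ _ h => False_ind _ (negP h erefl)).
by exists s.
Qed.

Lemma forced_notin N (t : Pair N) j P : j \notin forced_set t j P.
Proof. by rewrite /forced_set; case: ifP => _; rewrite !inE eqxx. Qed.

Lemma Omega_uniq N (t : Pair N) P x y : P \in Omega t -> x \in P -> x \in val t ->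
  y \in P -> y \in val t -> x = y.
Proof.
rewrite inE => /cards1P [z E] xP xt yP yt.
have : x \in P :&: val t by rewrite inE xP xt.
have : y \in P :&: val t by rewrite inE yP yt.
by rewrite E !inE => /eqP -> /eqP ->.
Qed.

Lemma forced_inj N (t : Pair N) j P P' : P \in Omega t -> j \in P ->
  P' \in Omega t -> j \in P' -> forced_set t j P = forced_set t j P' -> P = P'.
Proof.
move=> PO jP P'O jP' e; apply/setP => x.
case: (eqVneq x j) => [->|xj]; first by rewrite jP jP'.
have := congr1 (fun A : {set 'I_N} => x \in A) e; rewrite /forced_set /=.
case: ifP => jt; rewrite !inE xj /=; last by [].
case: (boolP (x \in val t)) => xt; last by rewrite !orbF.
have xP : x \notin P by apply/negP => xP; move/eqP: xj; apply; apply: (Omega_uniq PO).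
have xP' : x \notin P' by apply/negP => xP0; move/eqP: xj; apply; apply: (Omega_uniq P'O).
by rewrite (negbTE xP) (negbTE xP').
Qed.

Lemma sigma_exists N (t : Pair N) p j : pi_ok t p -> exists s, sigma_ok t p j s.
Proof.
move=> /bij_onP [p1 p2 p3].
pose h S := if [pick P | (P \in Omega t) && (j \in P) && (forced_set t j P == S)] is Some P
            then p P else None.
have hspec P : P \in Omega t -> j \in P -> h (forced_set t j P) = p P.
  move=> PO jP; rewrite /h; case: pickP => [P0 /andP [/andP [P0O jP0] /eqP E]|].
    by rewrite (forced_inj P0O jP0 PO jP E).
  by move/(_ P); rewrite PO jP eqxx.
have hdom S : h S != None -> S \in [set X : {set 'I_N} | j \notin X].
  rewrite /h; case: pickP => [P0 /andP [/andP [P0O jP0] /eqP <-]|] _; last by [].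
  by rewrite inE forced_notin.
have hinj S S' : h S != None -> h S = h S' -> S = S'.
  rewrite /h; case: pickP => [P0 /andP [/andP [P0O jP0] /eqP <-]|] //.
  case: pickP => [P1 /andP [/andP [P1O jP1] /eqP <-]|] //; last first.
    by move=> _ nz e; rewrite e in nz.
  by move=> nz e; rewrite (p3 _ _ nz e).
have [s [hs hsh]] := @extend_bij N [set X : {set 'I_N} | j \notin X] h (Lf_gt0 N) (card_notin j) hdom hinj.
exists s; apply/andP; split.
  by rewrite (bij_on_ext _ (D2 := fun S => S \in [set X : {set 'I_N} | j \notin X])) // => S; rewrite inE.
apply/forallP => P; apply/implyP => /andP [PO jP].
rewrite hsh hspec //.
by rewrite p1 PO.
Qed.
Local Open Scope ring_scope.
Lemma xor_sym N (P : {set 'I_N}) (F : 'I_N -> 'I_N -> bool) :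
  (forall x y, F x y = F y x) ->
  \big[addb/false]_(j in P) \big[addb/false]_(v in P :\ j) F j v = false.
Proof.
move=> Fs.
have E j : \big[addb/false]_(v in P :\ j) F j v =
   \big[addb/false]_(v in P | (j < v)%N) F j v (+) \big[addb/false]_(v in P | (v < j)%N) F j v.
  rewrite (bigID (fun v : 'I_N => (j < v)%N)) /=; congr addb; apply: eq_bigl => v; rewrite !inE.
    by case: (eqVneq v j) => [->|] //=; rewrite ltnn andbF.
  case: (eqVneq v j) => [->|vj] /=; first by rewrite ltnn andbF.
  rewrite -leqNgt [X in _ = _ && X]ltn_neqAle.
  by rewrite -[(v : nat) != j]/(v != j) vj.
rewrite (eq_bigr _ (fun j _ => E j)) big_split /=.
rewrite (exchange_big_dep (fun j : 'I_N => j \in P)) /=; last by move=> i j _ /andP [].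
rewrite [X in X (+) _](eq_bigr (fun j : 'I_N => \big[addb/false]_(v in P | (v < j)%N) F j v)); last first.
  move=> j jP; apply: eq_big => [v|v _]; last by apply: Fs.
  by rewrite jP.
by rewrite addbb.
Qed.

Lemma Wbit_sym N (W : Files N) x y l : Wbit W x y l = Wbit W y x l.
Proof. by rewrite /Wbit setUC. Qed.

Lemma mu_pos_inv (R : realType) N t W p s : 0 < mu R (t, W, p, s) ->
  @pi_ok N t p /\ forall k, sigma_ok t p k (s k).
Proof.
rewrite /mu; case: (boolP (pi_ok t p)) => hp; last by rewrite mul0r mulr0 mul0r ltxx.
case: (boolP [forall k, sigma_ok t p k (s k)]) => [/forallP //|/forallPn [k nk]].
by rewrite (bigD1 k) //= (negbTE nk) mul0r mul0r mulr0 ltxx.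
Qed.
Definition dec N (t : Pair N) (q : {ffun 'I_N -> Lab N})
    (a : {ffun 'I_N -> {ffun {set 'I_N} -> bool}}) : Bits N :=
  [ffun l => if [pick P | (P \in Omega t) && [exists j in P, q j (forced_set t j P) == Some l]]
             is Some P then \big[addb/false]_(j in P) a j (forced_set t j P) else false].

Lemma reliable_ok (R : realType) N : reliable R N.
Proof.
rewrite /reliable; exists (@dec N); move=> [[[t W] p] s] /mu_pos_inv [hp hs].
rewrite /theta /files /=.
have [p1 p2 p3] := bij_onP _ _ hp.
have K P j : P \in Omega t -> j \in P -> s j (forced_set t j P) = p P.
  by move=> PO jP; move/andP: (hs j) => [_ /forallP /(_ P)]; rewrite PO jP => /eqP.
have [i [i' [ii' ti]]] := pairP t.
apply/ffunP => l; rewrite ffunE.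
have [P0 e0] := p2 l.
have P0O : P0 \in Omega t by move: (p1 P0); rewrite e0 => /esym /negbFE.
have [a [b [ab [tab [aP bP]]]]] : exists a b, [/\ a != b, val t = [set a; b], a \in P0 & b \notin P0].
  move: (P0O); rewrite (inOmega _ ii' ti); case: (boolP (i \in P0)) => Hi /= Hi'.
    by exists i, i'; split => //; rewrite -(negbK (i' \in P0)) Hi'.
  exists i', i; split => //; first by rewrite eq_sym.
  - by rewrite ti setUC.
  - by move: Hi'; case: (i' \in P0).
case: pickP => [P /andP [PO /existsP [j /andP [jP]]]|none]; last first.
  move: (none P0); rewrite P0O /=; case/existsP; exists a; rewrite aP ffunE /query /sigmaOf /=.
  by rewrite K // e0.
rewrite ffunE /query /sigmaOf /= K // -e0 => /eqP E.
have E' : P = P0 by apply: (p3 _ _ _ E); rewrite E e0.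
subst P; clear j jP E.
have jt j : j \in P0 -> j != a -> j \notin val t.
  move=> jP ja; apply/negP => jt; move/eqP: ja; apply; apply: (Omega_uniq P0O) => //.
  by rewrite tab !inE eqxx.
have Fa : forced_set t a P0 = b |: (P0 :\ a).
  rewrite /forced_set tab !inE eqxx /= setUC; congr (_ :|: _).
  apply/setP => x; rewrite !inE; case: (eqVneq x a) => [->|xa] //=.
  by rewrite (negbTE ab).
have Fj j : j \in P0 -> j != a -> forced_set t j P0 = P0 :\ j.
  by move=> jP ja; rewrite /forced_set (negbTE (jt j jP ja)).
have ans j : j \in P0 -> [ffun j => answer (t, W, p, s) j] j (forced_set t j P0) =
    \big[addb/false]_(v in forced_set t j P0) Wbit W j v l.
  move=> jP; rewrite !ffunE /sigmaOf /= K // e0.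
  have -> : (forced_set t j P0 != set0) = true; last by [].
  apply/set0Pn; case: (eqVneq j a) => [->|ja].
    by exists b; rewrite Fa setU11.
  by exists a; rewrite Fj // !inE aP andbT eq_sym ja.
rewrite (eq_bigr _ ans) (bigD1 a) //= Fa big_setU1 /=; last by rewrite !inE negb_and bP orbT.
rewrite -addbA.
have -> : \big[addb/false]_(v in P0 :\ a) Wbit W a v l (+)
    \big[addb/false]_(j in P0 | j != a) \big[addb/false]_(v in forced_set t j P0) Wbit W j v l
  = \big[addb/false]_(j in P0) \big[addb/false]_(v in P0 :\ j) Wbit W j v l.
  rewrite [RHS](bigD1 a) //=; congr addb; apply: eq_bigr => j /andP [jP ja].
  by rewrite Fj.
rewrite xor_sym; last by move=> x y; apply: Wbit_sym.
by rewrite addbF /Wbit -tab valK.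
Qed.
Lemma sum_bool_card (R : realType) (T : finType) (P : pred T) :
  \sum_(x : T) ((P x)%:R : R) = (#|P|%:R : R).
Proof.
rewrite -sum1_card natr_sum [RHS]big_mkcond /=; apply: eq_bigr => x _.
by rewrite unfold_in; case: (P x).
Qed.

Lemma sum_pair (R : realType) (I J : finType) (G : I * J -> R) :
  \sum_(x : I * J) G x = \sum_(i : I) \sum_(j : J) G (i, j).
Proof. by rewrite pair_bigA; apply: eq_bigr => -[]. Qed.

Lemma sum_out (R : realType) N (F : Outcome N -> R) :
  \sum_(w : Outcome N) F w =
  \sum_(t : Pair N) \sum_(W : Files N) \sum_(p : Lab N) \sum_(s : {ffun 'I_N -> Lab N})
     F (t, W, p, s).
Proof.
rewrite sum_pair sum_pair sum_pair; apply: eq_bigr => t _; apply: eq_bigr => W _.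
by [].
Qed.

Lemma sum_delta (R : realType) (T : finType) (a : T) (G : T -> R) :
  \sum_(y : T) (if a == y then G y else 0) = G a.
Proof.
rewrite (bigD1 a) //= eqxx big1 ?addr0 // => y ya.
by rewrite eq_sym (negbTE ya).
Qed.

Lemma sum_inv_card (R : realType) (T : finType) : (0 < #|T|)%N ->
  \sum_(x : T) ((#|T|%:R : R)^-1) = 1.
Proof.
move=> T0; rewrite sumr_const; have -> : #|[pred x : T | true]| = #|T| by apply: eq_card.
rewrite -[LHS]mulr_natr mulVf //.
by rewrite pnatr_eq0 -lt0n.
Qed.

Definition pw (R : realType) N (t : Pair N) (p : Lab N) : R :=
  (pi_ok t p)%:R / #|[pred q | pi_ok t q]|%:R.
Definition sw (R : realType) N (t : Pair N) (p : Lab N) (k : 'I_N) (u : Lab N) : R :=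
  (sigma_ok t p k u)%:R / #|[pred v | sigma_ok t p k v]|%:R.

Lemma muE (R : realType) N t W p s : mu R (t, W, p, s) =
  (#|{: Pair N}|%:R)^-1 * (#|{: Files N}|%:R)^-1 * pw R t p *
  \prod_(k < N) sw R t p k (s k).
Proof. by []. Qed.

Lemma pw_ge0 (R : realType) N t p : 0 <= @pw R N t p.
Proof. by rewrite /pw divr_ge0 ?ler0n. Qed.

Lemma sw_ge0 (R : realType) N t p k u : 0 <= @sw R N t p k u.
Proof. by rewrite /sw divr_ge0 ?ler0n. Qed.

Lemma pw_sum (R : realType) N t : \sum_p @pw R N t p = 1.
Proof.
rewrite /pw -mulr_suml sum_bool_card mulfV // pnatr_eq0 -lt0n.
by have [p hp] := pi_exists t; apply/card_gt0P; exists p.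
Qed.

Lemma sw_sum (R : realType) N t p k : pi_ok t p -> \sum_u @sw R N t p k u = 1.
Proof.
move=> hp; rewrite /sw -mulr_suml sum_bool_card mulfV // pnatr_eq0 -lt0n.
by have [u hu] := sigma_exists k hp; apply/card_gt0P; exists u.
Qed.

Lemma pw_prod (R : realType) N t p :
  @pw R N t p * \sum_(s : {ffun 'I_N -> Lab N}) \prod_(k < N) sw R t p k (s k) = pw R t p.
Proof.
case: (boolP (pi_ok t p)) => hp; last by rewrite /pw (negbTE hp) !mul0r.
by rewrite -bigA_distr_bigA big1 ?mulr1 // => k _; apply: sw_sum.
Qed.
Lemma Pair_gt0 N : (1 < N)%N -> (0 < #|{: Pair N}|)%N.
Proof.
move=> h.
pose i0 : 'I_N := Ordinal (ltn_trans (ltnSn 0) h).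
pose i1 : 'I_N := Ordinal h.
have H : #|[set i0; i1]| == 2%N by rewrite cards2.
by apply/card_gt0P; exists (exist (fun e : {set 'I_N} => #|e| == 2%N) _ H).
Qed.

Lemma Files_gt0 N : (0 < #|{: Files N}|)%N.
Proof. by apply/card_gt0P; exists [ffun _ => [ffun _ => false]]. Qed.

Lemma inner_tW (R : realType) N t :
  \sum_(p : Lab N) \sum_(s : {ffun 'I_N -> Lab N})
     ((#|{: Pair N}|%:R)^-1 * (#|{: Files N}|%:R)^-1 * pw R t p * \prod_(k < N) sw R t p k (s k))
  = (#|{: Pair N}|%:R)^-1 * (#|{: Files N}|%:R)^-1.
Proof.
rewrite (eq_bigr (fun p => (#|{: Pair N}|%:R)^-1 * (#|{: Files N}|%:R)^-1 * pw R t p)).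
  by rewrite -mulr_sumr pw_sum mulr1.
by move=> p _; rewrite -mulr_sumr -mulrA pw_prod.
Qed.

Lemma mass (R : realType) N : (1 < N)%N -> \sum_(w : Outcome N) mu R w = 1.
Proof.
move=> h; rewrite sum_out.
under eq_bigr => t _ do under eq_bigr => W _ do under eq_bigr => p _ do
  under eq_bigr => s _ do rewrite muE.
under eq_bigr => t _ do under eq_bigr => W _ do rewrite inner_tW.
under eq_bigr => t _ do rewrite -mulr_sumr sum_inv_card ?Files_gt0 // mulr1.
by rewrite sum_inv_card // Pair_gt0.
Qed.

Lemma mu_ge0 (R : realType) N (w : Outcome N) : 0 <= mu R w.
Proof.
case: w => [[[t W] p] s]; rewrite muE !mulr_ge0 ?invr_ge0 ?ler0n ?pw_ge0 //.
by apply: prodr_ge0 => k _; apply: sw_ge0.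
Qed.

Lemma pr_ge0 (R : realType) N (T : finType) (X : Outcome N -> T) x : 0 <= pr R X x.
Proof. by apply: sumr_ge0 => w _; apply: mu_ge0. Qed.

Lemma pr_mkcond (R : realType) N (T : finType) (X : Outcome N -> T) x :
  pr R X x = \sum_w (X w == x)%:R * mu R w.
Proof.
rewrite /pr big_mkcond; apply: eq_bigr => w _.
by case: (X w == x); rewrite ?mul1r ?mul0r.
Qed.

Lemma marg_l (R : realType) N (T U : finType) (X : Outcome N -> T) (Y : Outcome N -> U) x :
  pr R X x = \sum_y pr R (fun w => (X w, Y w)) (x, y).
Proof.
under eq_bigr => y _ do rewrite pr_mkcond.
rewrite pr_mkcond.
rewrite exchange_big /=; apply: eq_bigr => w _.
rewrite (eq_bigr (fun y => if Y w == y then (X w == x)%:R * mu R w else 0)) ?sum_delta //.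
by move=> y _; rewrite xpair_eqE; case: (X w == x); case: (Y w == y); rewrite ?mul0r ?mul1r.
Qed.

Lemma marg_r (R : realType) N (T U : finType) (X : Outcome N -> T) (Y : Outcome N -> U) y :
  pr R Y y = \sum_x pr R (fun w => (X w, Y w)) (x, y).
Proof.
under eq_bigr => x _ do rewrite pr_mkcond.
rewrite pr_mkcond.
rewrite exchange_big /=; apply: eq_bigr => w _.
rewrite (eq_bigr (fun x => if X w == x then (Y w == y)%:R * mu R w else 0)) ?sum_delta //.
by move=> x _; rewrite xpair_eqE; case: (X w == x); case: (Y w == y); rewrite ?mul0r ?mul1r.
Qed.

Lemma mass_pr (R : realType) N (T : finType) (X : Outcome N -> T) :
  \sum_x pr R X x = \sum_(w : Outcome N) mu R w.
Proof.
under eq_bigr => x _ do rewrite pr_mkcond.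
rewrite exchange_big /=; apply: eq_bigr => w _.
rewrite (eq_bigr (fun x => if X w == x then mu R w else 0)) ?sum_delta //.
by move=> x _; case: (X w == x); rewrite ?mul0r ?mul1r.
Qed.

Lemma xlog (R : realType) (a b : R) : 0 <= a -> 0 <= b ->
  a * b * log2 (a * b) = a * b * log2 a + a * b * log2 b.
Proof.
move=> a0 b0.
have [->|an] := eqVneq a 0; first by rewrite !mul0r add0r.
have [->|bn] := eqVneq b 0; first by rewrite !(mulr0, mul0r) addr0.
rewrite /log2 lnM ?posrE ?lt0r ?an ?bn //.
by rewrite mulrDl mulrDr.
Qed.

Lemma centropy_indep (R : realType) N (T U : finType) (X : Outcome N -> T) (Y : Outcome N -> U) :
  (forall x y, pr R (fun w => (X w, Y w)) (x, y) = pr R X x * pr R Y y) ->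
  \sum_(w : Outcome N) mu R w = 1 -> centropy R X Y = entropy R X.
Proof.
move=> H m1.
have sX : \sum_x pr R X x = 1 by rewrite mass_pr.
have sY : \sum_y pr R Y y = 1 by rewrite mass_pr.
rewrite /centropy /entropy sum_pair.
have E x : \sum_y pr R (fun w => (X w, Y w)) (x, y) * log2 (pr R (fun w => (X w, Y w)) (x, y)) =
   pr R X x * log2 (pr R X x) + pr R X x * \sum_y pr R Y y * log2 (pr R Y y).
  under eq_bigr => y _ do rewrite H xlog ?pr_ge0 //.
  rewrite big_split /=; congr (_ + _).
    rewrite -[RHS]mulr1 -sY mulr_sumr; apply: eq_bigr => y _.
    by rewrite mulrAC.
  by rewrite mulr_sumr; apply: eq_bigr => y _; rewrite mulrA.
rewrite (eq_bigr _ (fun x _ => E x)) big_split /= -mulr_suml sX mul1r.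
by rewrite opprD opprK addrNK.
Qed.
Lemma sum_delta' (R : realType) (T : finType) (a : T) (G : T -> R) :
  \sum_(y : T) ((a == y)%:R * G y) = G a.
Proof.
rewrite -(sum_delta a G); apply: eq_bigr => y _.
by case: (a == y); rewrite ?mul1r ?mul0r.
Qed.

Lemma factor_indep (R : realType) N (T U : finType) (X : Outcome N -> T) (Y : Outcome N -> U)
  (al : T -> R) (be : U -> R) :
  (forall x y, pr R (fun w => (X w, Y w)) (x, y) = al x * be y) ->
  \sum_x al x = 1 -> \sum_(w : Outcome N) mu R w = 1 ->
  forall x y, pr R (fun w => (X w, Y w)) (x, y) = pr R X x * pr R Y y.
Proof.
move=> H sa m1.
have pY y : pr R Y y = be y.
  by rewrite (@marg_r R N T U X Y); under eq_bigr => x _ do rewrite H; rewrite -mulr_suml sa mul1r.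
have sb : \sum_y be y = 1 by under eq_bigr => y _ do rewrite -pY; rewrite mass_pr.
have pX x : pr R X x = al x.
  by rewrite (@marg_l R N T U X Y); under eq_bigr => y _ do rewrite H; rewrite -mulr_sumr sb mulr1.
by move=> x y; rewrite H pX pY.
Qed.

Definition stF N (W : Files N) (j : 'I_N) : {ffun Pair N -> option (Bits N)} :=
  [ffun e : Pair N => if j \in val e then Some (W e) else None].

Definition fq (R : realType) N (j : 'I_N) (t : Pair N) (u : Lab N) : R :=
  \sum_p pw R t p * sw R t p j u.

Lemma s_sum (R : realType) N (t : Pair N) p j u : pi_ok t p ->
  \sum_(s : {ffun 'I_N -> Lab N}) (s j == u)%:R * \prod_(k < N) sw R t p k (s k) = sw R t p j u.
Proof.
move=> hp.
pose F k v := if k == j then (v == u)%:R * sw R t p k v else sw R t p k v.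
transitivity (\sum_(s : {ffun 'I_N -> Lab N}) \prod_(k < N) F k (s k)).
  apply: eq_bigr => s _; rewrite (bigD1 j) //= [in RHS](bigD1 j) //=.
  have -> : F j (s j) = (s j == u)%:R * sw R t p j (s j) by rewrite /F eqxx.
  rewrite mulrA; congr (_ * _).
  by apply: eq_bigr => k /negbTE kj; rewrite /F kj.
rewrite -bigA_distr_bigA (bigD1 j) //= [X in _ * X]big1 ?mulr1.
  rewrite /F eqxx (eq_bigr (fun v => (u == v)%:R * sw R t p j v)) ?sum_delta' //.
  by move=> v _; rewrite eq_sym.
by move=> k kj; rewrite /F (negbTE kj) sw_sum.
Qed.

Lemma inner_ps (R : realType) N (t : Pair N) j u (c : R) :
  \sum_(p : Lab N) \sum_(s : {ffun 'I_N -> Lab N})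
     (c * (pw R t p * ((s j == u)%:R * \prod_(k < N) sw R t p k (s k)))) = c * fq R j t u.
Proof.
rewrite /fq mulr_sumr; apply: eq_bigr => p _.
rewrite -mulr_sumr -mulr_sumr; congr (_ * _).
case: (boolP (pi_ok t p)) => hp; first by rewrite s_sum.
by rewrite /pw (negbTE hp) !mul0r.
Qed.

Lemma joint (R : realType) N (j : 'I_N) t0 u st :
  pr R (fun w => (theta w, (query w j, stored w j))) (t0, (u, st)) =
  (#|{: Pair N}|%:R)^-1 *
  ((\sum_(W : Files N) (stF W j == st)%:R * (#|{: Files N}|%:R)^-1) * fq R j t0 u).
Proof.
rewrite pr_mkcond sum_out.
have termE t W p s :
  ((theta (t, W, p, s), (query (t, W, p, s) j, stored (t, W, p, s) j)) == (t0, (u, st)))%:R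
    * mu R (t, W, p, s) =
  ((t0 == t)%:R * ((stF W j == st)%:R * (#|{: Files N}|%:R : R)^-1) * (#|{: Pair N}|%:R : R)^-1) *
    (pw R t p * ((s j == u)%:R * \prod_(k < N) sw R t p k (s k))).
  rewrite muE !xpair_eqE (eq_sym t0).
  rewrite -[stored _ j]/(stF W j) -[query _ j]/(s j) -[theta _]/t.
  by case: (t == t0); case: (s j == u); case: (stF W j == st) => /=; ring.
under eq_bigr => t _ do under eq_bigr => W _ do under eq_bigr => p _ do
  under eq_bigr => s _ do rewrite termE.
under eq_bigr => t _ do under eq_bigr => W _ do rewrite inner_ps.
rewrite (eq_bigr (fun t => (t0 == t)%:R * ((#|{: Pair N}|%:R : R)^-1 * fq R j t u *
   \sum_(W : Files N) (stF W j == st)%:R * (#|{: Files N}|%:R : R)^-1))); last first.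
  by move=> t _; rewrite mulr_sumr mulr_sumr; apply: eq_bigr => W _; ring.
by rewrite sum_delta'; ring.
Qed.
Definition bijN N (j : 'I_N) (u : Lab N) : bool := bij_on (fun S => j \notin S) u.

Lemma fq_nonbij (R : realType) N (j : 'I_N) t u : ~~ bijN j u -> fq R j t u = 0.
Proof.
move=> nb; rewrite /fq big1 // => p _.
by move: nb; rewrite /sw /sigma_ok /bijN => /negbTE -> /=; rewrite mul0r mulr0.
Qed.

Lemma card_sigma_relab (R : realType) N t p (j : 'I_N) r : injective r ->
  (#|[pred v | sigma_ok t (relab r p) j v]|%:R : R) = #|[pred v | sigma_ok t p j v]|%:R.
Proof.
move=> ir; rewrite -!sum_bool_card (reindex_inj (relab_inj ir)) /=.
by apply: eq_bigr => v _; rewrite sigma_ok_relab.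
Qed.

Lemma fq_relab (R : realType) N (j : 'I_N) t u u' : bijN j u -> bijN j u' ->
  fq R j t u = fq R j t u'.
Proof.
move=> bu bu'; have [r [ir <-]] := relab_exists bu bu'.
rewrite /fq [RHS](reindex_inj (relab_inj ir)) /=; apply: eq_bigr => p _.
by rewrite /pw /sw pi_ok_relab // sigma_ok_relab // card_sigma_relab.
Qed.

Lemma fq_sum (R : realType) N (j : 'I_N) t : \sum_u fq R j t u = 1.
Proof.
rewrite /fq exchange_big /= -(pw_sum R t); apply: eq_bigr => p _.
rewrite -mulr_sumr; case: (boolP (pi_ok t p)) => hp; first by rewrite sw_sum ?mulr1.
by rewrite /pw (negbTE hp) !mul0r.
Qed.

Definition gq (R : realType) N (j : 'I_N) (u : Lab N) : R :=
  (bijN j u)%:R / #|[pred v | bijN j v]|%:R.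

Lemma fq_closed (R : realType) N (j : 'I_N) t u : fq R j t u = gq R j u.
Proof.
have [p0 hp0] := pi_exists t; have [u0 hu0] := sigma_exists j hp0.
have b0 : bijN j u0 by case/andP: hu0.
have E v : fq R j t v = (bijN j v)%:R * fq R j t u0.
  case: (boolP (bijN j v)) => bv; first by rewrite mul1r (fq_relab _ _ bv b0).
  by rewrite mul0r fq_nonbij.
have := fq_sum R j t; under eq_bigr => v _ do rewrite E.
rewrite -mulr_suml sum_bool_card => H.
have nz : (#|[pred v | bijN j v]|%:R : R) != 0.
  by rewrite pnatr_eq0 -lt0n; apply/card_gt0P; exists u0.
rewrite E /gq; congr (_ * _); apply: (mulfI nz); rewrite H mulfV //.
Qed.

Lemma private_ok (R : realType) N : (1 < N)%N -> private R N.
Proof.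
move=> N1 j; apply: centropy_indep; last by apply: mass.
apply: (@factor_indep R N _ _ _ _ (fun _ => (#|{: Pair N}|%:R : R)^-1)
   (fun y => (\sum_(W : Files N) (stF W j == y.2)%:R * (#|{: Files N}|%:R : R)^-1) * gq R j y.1)).
- by move=> t [u st]; rewrite joint fq_closed.
- by rewrite sum_inv_card // Pair_gt0.
- by apply: mass.
Qed.
Definition ansF N (W : Files N) (u : Lab N) (j : 'I_N) : {ffun {set 'I_N} -> bool} :=
  [ffun P => if u P is Some l then (P != set0) && \big[addb/false]_(v in P) Wbit W j v l
             else false].

Definition Dj N (j : 'I_N) : {set {set 'I_N}} := [set S | (S != set0) && (j \notin S)].

Definition Vj N (j : 'I_N) : {set {ffun {set 'I_N} -> bool}} :=
  [set a : {ffun {set 'I_N} -> bool} | [forall S, a S ==> (S \in Dj j)]].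

Lemma card_Dj N (j : 'I_N) : #|Dj j| = (2 ^ (N - 1) - 1)%N.
Proof.
have := cardsD1 set0 [set X : {set 'I_N} | j \notin X]; rewrite card_notin !inE.
have -> : [set X : {set 'I_N} | j \notin X] :\ set0 = Dj j.
  by apply/setP => S; rewrite !inE.
by move=> ->; rewrite add1n subSS subn0.
Qed.

Lemma card_Vj N (j : 'I_N) : #|Vj j| = (2 ^ (2 ^ (N - 1) - 1))%N.
Proof.
rewrite -(card_Dj j) -[in RHS]card_bool -(card_pffun_on false).
apply: eq_card => a; rewrite inE; apply/forallP/pffun_onP => [H|[H _] S].
  split; last by move=> b _; rewrite inE.
  apply/subsetP => S; rewrite inE => aS; move/implyP: (H S); apply.
  by case: (a S) aS.
apply/implyP => aS; apply: (subsetP H); by rewrite inE aS.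
Qed.

Lemma bij_some N (j : 'I_N) u P l : bijN j u -> u P = Some l -> j \notin P.
Proof. by case/bij_onP => u1 _ _ e; move: (u1 P); rewrite e /= => /esym/negbFE. Qed.

Lemma bij_none N (j : 'I_N) u P : bijN j u -> u P = None -> j \in P.
Proof. by case/bij_onP => u1 _ _ e; move: (u1 P); rewrite e eqxx negbK => <-. Qed.

Lemma ans_in_V N (W : Files N) u j : bijN j u -> ansF W u j \in Vj j.
Proof.
move=> bu; rewrite inE; apply/forallP => S; apply/implyP.
rewrite ffunE; case e: (u S) => [l|] // /andP [S0 _].
by rewrite inE S0 (bij_some bu e).
Qed.

Definition xorW N (W D : Files N) : Files N := [ffun e => [ffun l => W e l (+) D e l]].

Lemma xorW_inj N (D : Files N) : injective (fun W => xorW W D).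
Proof.
move=> W W' E; apply/ffunP => e; apply/ffunP => l.
move/ffunP: E => /(_ e) /ffunP /(_ l); rewrite !ffunE.
by move/(congr1 (addb^~ (D e l))); rewrite -!addbA addbb !addbF.
Qed.

Lemma Wbit_xor N (W D : Files N) j v l : Wbit (xorW W D) j v l = Wbit W j v l (+) Wbit D j v l.
Proof. by rewrite /Wbit; case: insub => [e|] //; rewrite !ffunE. Qed.

Lemma ansF_xor N (W D : Files N) u j :
  ansF (xorW W D) u j = [ffun P => ansF W u j P (+) ansF D u j P].
Proof.
apply/ffunP => P; rewrite !ffunE; case: (u P) => [l|] //.
under eq_bigr => v _ do rewrite Wbit_xor.
by rewrite big_split /=; case: (P != set0).
Qed.

Definition vpick N (P : {set 'I_N}) (j : 'I_N) : 'I_N := odflt j [pick v in P].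

Definition Delta N (u : Lab N) (j : 'I_N) (a a' : {ffun {set 'I_N} -> bool}) : Files N :=
  [ffun e => [ffun l => if [pick P | u P == Some l] is Some P
                        then (a P != a' P) && (val e == [set j; vpick P j]) else false]].

Lemma Wbit_pair N (j v : 'I_N) : j != v ->
  exists e : Pair N, val e = [set j; v] /\ forall W l, Wbit W j v l = W e l.
Proof.
move=> jv; have H : #|[set j; v]| == 2%N by rewrite cards2 jv.
exists (exist (fun e : {set 'I_N} => #|e| == 2%N) _ H); split => // W l.
by rewrite /Wbit insubT.
Qed.

Lemma set2_eq N (j v v' : 'I_N) : j != v -> ([set j; v] == [set j; v']) = (v == v').
Proof.
move=> jv; apply/eqP/eqP => [E|->] //.
have : v \in [set j; v'] by rewrite -E !inE eqxx orbT.
by rewrite !inE => /orP [/eqP vj|/eqP //]; move: jv; rewrite vj eqxx.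
Qed.

Lemma ansF_Delta N (u : Lab N) j a a' : bijN j u -> a \in Vj j -> a' \in Vj j ->
  ansF (Delta u j a a') u j = [ffun P => a P != a' P].
Proof.
move=> bu aV a'V; have [u1 u2 u3] := bij_onP _ _ bu.
have aD b : b \in Vj j -> forall P, P \notin Dj j -> b P = false.
  by rewrite inE => /forallP H P PD; apply/negP => bP; move/implyP: (H P) => /(_ bP); apply/negP.
apply/ffunP => P; rewrite !ffunE; case e: (u P) => [l|]; last first.
  have PD : P \notin Dj j by rewrite inE negb_and (bij_none bu e) orbT.
  by rewrite !aD.
have jP : j \notin P by apply: (bij_some bu e).
case: (eqVneq P set0) => [->|P0] /=.
  by rewrite !aD // inE eqxx.
have vP : vpick P j \in P.
  rewrite /vpick; case: pickP => [v //|none]; case/set0Pn: P0 => v vP.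
  by move: (none v); rewrite vP.
rewrite (bigD1 (vpick P j)) //= big1 ?addbF.
  have jv : j != vpick P j by apply: contraNneq jP => ->.
  have [e0 [ve0 ->]] := Wbit_pair jv.
  rewrite !ffunE; case: pickP => [P' /eqP e'|none]; last by move: (none P); rewrite e eqxx.
  have EP : P' = P by apply: u3; rewrite ?e' ?e.
  by rewrite EP ve0 eqxx andbT.
move=> v /andP [vP' vv].
have jv : j != v by apply: contraNneq jP => ->.
have [e0 [ve0 ->]] := Wbit_pair jv.
rewrite !ffunE; case: pickP => [P' /eqP e'|] //.
have EP : P' = P by apply: u3; rewrite ?e' ?e.
by rewrite EP ve0 set2_eq // (negbTE vv) andbF.
Qed.

Definition fib N (u : Lab N) j (a : {ffun {set 'I_N} -> bool}) : {set Files N} :=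
  [set W | ansF W u j == a].

Lemma fib_le N (u : Lab N) j a a' : bijN j u -> a \in Vj j -> a' \in Vj j ->
  (#|fib u j a| <= #|fib u j a'|)%N.
Proof.
move=> bu aV a'V.
rewrite -(card_imset (fib u j a) (@xorW_inj N (Delta u j a a'))).
apply: subset_leq_card; apply/subsetP => W' /imsetP [W]; rewrite !inE => /eqP aW ->.
rewrite ansF_xor ansF_Delta // aW; apply/eqP/ffunP => P; rewrite !ffunE.
by case: (a P); case: (a' P).
Qed.

Lemma sum_nat_card (T : finType) (P : pred T) : (\sum_(x : T) (P x : nat))%N = #|P|.
Proof.
rewrite -sum1_card [RHS]big_mkcond /=; apply: eq_bigr => x _.
by rewrite unfold_in; case: (P x).
Qed.

Lemma fib_card N (u : Lab N) j a : bijN j u -> a \in Vj j ->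
  (#|fib u j a| * #|Vj j|)%N = #|{: Files N}|.
Proof.
move=> bu aV.
have E : forall b, b \in Vj j -> #|fib u j b| = #|fib u j a|.
  by move=> b bV; apply/eqP; rewrite eqn_leq !fib_le.
have S : #|{: Files N}| = (\sum_(W : Files N) \sum_(b in Vj j) (ansF W u j == b : nat))%N.
  rewrite -sum1_card; apply: eq_bigr => W _.
  rewrite (bigD1 (ansF W u j)) ?ans_in_V //= eqxx big1 // => b /andP [_ nb].
  by rewrite eq_sym (negbTE nb).
rewrite S exchange_big /= (eq_bigr (fun b => #|fib u j a|)); last first.
  move=> b bV; rewrite -(E b bV) -sum1_card [RHS]big_mkcond /=; apply: eq_bigr => W _.
  by rewrite inE; case: (_ == b).
by rewrite sum_nat_const mulnC.
Qed.
Lemma FS_val (R : realType) N (u : Lab N) j a : bijN j u ->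
  \sum_(W : Files N) (ansF W u j == a)%:R * (#|{: Files N}|%:R : R)^-1 =
  (a \in Vj j)%:R / #|Vj j|%:R.
Proof.
move=> bu; rewrite -mulr_suml (sum_bool_card R (fun W => ansF W u j == a)).
have -> : #|(fun W => ansF W u j == a)| = #|fib u j a| by apply: eq_card => W; rewrite inE.
case: (boolP (a \in Vj j)) => aV.
  have H := fib_card bu aV.
  have f0 : (#|fib u j a|%:R : R) != 0.
    rewrite pnatr_eq0; apply/negP => /eqP f0; move: H; rewrite f0 mul0n => /esym /eqP.
    by move/eqP => F0; move: (Files_gt0 N); rewrite F0.
  by rewrite -H natrM invfM mulrA mulfV ?mul1r.
have -> : #|fib u j a| = 0%N.
  apply/eqP; rewrite cards_eq0; apply/eqP/setP => W; rewrite !inE; apply/negP => /eqP E.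
  by move: (ans_in_V W bu); rewrite E (negbTE aV).
by rewrite !mul0r.
Qed.

Lemma pr_ans (R : realType) N (j : 'I_N) a : (1 < N)%N ->
  pr R (fun w => answer w j) a = (a \in Vj j)%:R / #|Vj j|%:R.
Proof.
move=> N1; rewrite pr_mkcond sum_out.
have termE t W p s : (answer (t, W, p, s) j == a)%:R * mu R (t, W, p, s) =
   ((#|{: Pair N}|%:R : R)^-1 * pw R t p * \prod_(k < N) sw R t p k (s k)) *
   ((ansF W (s j) j == a)%:R * (#|{: Files N}|%:R : R)^-1).
  by rewrite muE -[answer _ j]/(ansF W (s j) j); ring.
under eq_bigr => t _ do under eq_bigr => W _ do under eq_bigr => p _ do
  under eq_bigr => s _ do rewrite termE.
under eq_bigr => t _ do rewrite exchange_big /=.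
under eq_bigr => t _ do under eq_bigr => p _ do rewrite exchange_big /=.
under eq_bigr => t _ do under eq_bigr => p _ do under eq_bigr => s _ do rewrite -mulr_sumr.
set cV := (a \in Vj j)%:R / #|Vj j|%:R.
have E t p s : ((#|{: Pair N}|%:R : R)^-1 * pw R t p * \prod_(k < N) sw R t p k (s k)) *
   \sum_(W : Files N) (ansF W (s j) j == a)%:R * (#|{: Files N}|%:R : R)^-1 =
   ((#|{: Pair N}|%:R : R)^-1 * cV) * (pw R t p * \prod_(k < N) sw R t p k (s k)).
  case: (boolP (sigma_ok t p j (s j))) => hs.
    by rewrite FS_val; [rewrite /cV; ring | case/andP: hs].
  by rewrite (bigD1 j) //= /sw (negbTE hs) !(mul0r, mulr0).
under eq_bigr => t _ do under eq_bigr => p _ do under eq_bigr => s _ do rewrite E.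
under eq_bigr => t _ do under eq_bigr => p _ do rewrite -mulr_sumr -mulr_sumr pw_prod.
under eq_bigr => t _ do rewrite -mulr_sumr pw_sum mulr1.
by rewrite -mulr_suml sum_inv_card ?Pair_gt0 // mul1r.
Qed.

Lemma log2_pow (R : realType) k : log2 ((2 : R) ^+ k) = k%:R.
Proof.
rewrite /log2 lnXn // -[_ *+ k]mulr_natr mulrAC mulfV ?mul1r //.
by rewrite gt_eqF // ln_gt0 // ltr1n.
Qed.

Lemma ent_ans (R : realType) N (j : 'I_N) : (1 < N)%N ->
  entropy R (fun w => answer w j) = (2 ^ (N - 1) - 1)%:R.
Proof.
move=> N1; rewrite /entropy.
under eq_bigr => a _ do rewrite pr_ans //.
set V := (#|Vj j|%:R : R).
have V0 : 0 < V by rewrite /V ltr0n card_Vj expn_gt0.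
rewrite (eq_bigr (fun a => (a \in Vj j)%:R * (V^-1 * log2 (V^-1)))); last first.
  by move=> a _; case: (a \in Vj j); rewrite ?mul1r ?mul0r.
rewrite -mulr_suml.
have -> : \sum_a ((a \in Vj j)%:R : R) = V.
  by rewrite (sum_bool_card R (fun a => a \in Vj j)); congr (_%:R); apply: eq_card.
rewrite mulrA mulfV ?gt_eqF // mul1r.
rewrite /log2 lnV ?posrE // mulNr opprK.
by rewrite /V card_Vj natrX -/(log2 _) log2_pow.
Qed.

Lemma rate_ok (R : realType) N : (1 < N)%N ->
  rate R N = (2 ^ (N - 1))%:R / ((2 ^ (N - 1) - 1)%:R * N%:R).
Proof.
move=> N1; rewrite /rate /Lf; under eq_bigr => j _ do rewrite ent_ans //.
by rewrite sumr_const card_ord mulr_natr.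
Qed.

Theorem theorem8 (R : realType) (N : nat) : (3 <= N)%N ->
  reliable R N /\ private R N /\
  rate R N = (2 ^ (N - 1))%:R / ((2 ^ (N - 1) - 1)%:R * N%:R).
Proof.
move=> N3; have N1 : (1 < N)%N by apply: leq_trans N3.
split; first exact: reliable_ok.
split; first exact: private_ok.
exact: rate_ok.
Qed.
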